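(* Let $f$ be a probability density on $\mathbb{R}$ symmetric about $0$, let $G$ be an absolutely continuous cumulative distribution function on $\mathbb{R}$ symmetric about $0$ (i.e. $G(-x)=1-G(x)$) with density $g$, and let $\omega:\mathbb{R}\to\mathbb{R}$ be an odd function with $\omega(x)>0$ for $x>0$. For $\lambda\in\mathbb{R}$ define $$M_{TV}(\lambda)=\operatorname{sign}(\lambda)\,\frac12\int_{\mathbb{R}}\bigl|2G(\lambda\,\omega(x))-1\bigr|\,f(x)\,dx .$$ Suppose that $g$ is a bounded probability density and that $\int_0^\infty \omega(x)f(x)\,dx<\infty$. Then the $BTV(1,1)$ prior, i.e. the density $\pi_{TV}(\lambda\mid 1,1)=\frac{d}{d\lambda}M_{TV}(\lambda)$, is well defined for all $\lambda\in\mathbb{R}$ and is given by $$\pi_{TV}(\lambda\mid 1,1)=2\int_0^\infty \omega(x)\,f(x)\,g(\lambda\,\omega(x))\,dx .$$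
   Context: Skew-symmetric densities are $s_{f;G}(x;\mu,\sigma,\lambda)=\frac{2}{\sigma}f\left(\frac{x-\mu}{\sigma}\right)G\left(\lambda\,\omega\left(\frac{x-\mu}{\sigma}\right)\right)$, $x\in\mathbb{R}$, with $\mu\in\mathbb{R}$, $\sigma>0$, $\lambda\in\mathbb{R}$. $M_{TV}(\lambda)$ is $\operatorname{sign}(\lambda)$ times the total variation distance between $f$ and $s_{f;G}(\cdot;0,1,\lambda)$; it is an increasing map of $\mathbb{R}$ onto $(-1/2,1/2)$. The $BTV(\alpha,\beta)$ prior on $\lambda$ is the prior induced on $\lambda$ by placing a Beta$(\alpha,\beta)$ distribution on $M_{TV}(\lambda)$ over $(-1/2,1/2)$ (density $\frac{1}{B(\alpha,\beta)}(u+\frac12)^{\alpha-1}(\frac12-u)^{\beta-1}$), i.e. with density $\pi_{TV}(\lambda\mid\alpha,\beta)=\frac{1}{B(\alpha,\beta)}(M_{TV}(\lambda)+\frac12)^{\alpha-1}(\frac12-M_{TV}(\lambda))^{\beta-1}\frac{d}{d\lambda}M_{TV}(\lambda)$; for $\alpha=\beta=1$ this is $\frac{d}{d\lambda}M_{TV}(\lambda)$. *)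

(* Defs.v *)
From HB Require Import structures.
From mathcomp Require Import all_boot all_order all_algebra.
From mathcomp Require Import all_classical all_reals all_analysis.
Set Implicit Arguments. Unset Strict Implicit. Unset Printing Implicit Defensive.
Import Order.TTheory GRing.Theory Num.Theory.
Import numFieldNormedType.Exports.
Local Open Scope classical_set_scope.
Local Open Scope ring_scope.

Definition RInt (R : realType) (D : set R) (h : R -> R) : R :=
  fine (\int[@lebesgue_measure R]_(x in D) (h x)%:E)%E.

Definition M_TV (R : realType) (f G w : R -> R) (lam : R) : R :=
  Num.sg lam * (2^-1 * RInt setT (fun x => `|2 * G (lam * w x) - 1| * f x)).

Definition prob_density (R : realType) (h : R -> R) : Prop :=
  measurable_fun setT h /\ (forall x, 0 <= h x) /\
  (\int[@lebesgue_measure R]_(x in setT) (h x)%:E = 1)%E.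

(* Main.v *)
Require Import Defs.
From HB Require Import structures.
From mathcomp Require Import all_boot all_order all_algebra.
From mathcomp Require Import all_classical all_reals all_analysis.
From mathcomp Require Import measurable_realfun lra ring.
Import Order.TTheory GRing.Theory Num.Theory.
Import numFieldNormedType.Exports.
Local Open Scope classical_set_scope.
Local Open Scope ring_scope.

Set Implicit Arguments. Unset Strict Implicit.

Lemma even_int (R : realType) (h : R -> R) : measurable_fun setT h ->
  (forall x, 0 <= h x) -> (forall x, h (- x) = h x) ->
  (\int[@lebesgue_measure R]_(x in setT) (h x)%:E =
   2%:E * \int[@lebesgue_measure R]_(x in `[0%R, +oo[) (h x)%:E)%E.
Proof.
move=> mh h0 hev.
have mA : measurable (`[0%R, +oo[ : set R) by [].
rewrite -(setUv (`[0%R, +oo[ : set R)) ge0_integral_setU//=.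
2: exact: measurableC.
2: by rewrite setUv; apply/measurable_realfun.measurable_EFinP.
2: by move=> *; rewrite lee_fin.
2: by apply/disj_setPCl.
rewrite (_ : 2%:E = 2%:R%:E)// mule_natl mule2n; congr +%E.
rewrite setCitvr /= integral_itv_bndo_bndc; last first.
  by apply/measurable_realfun.measurable_EFinP; exact: measurable_funTS.
rewrite [in RHS]ge0_integration_by_substitution0; last 2 first.
  by apply/measurable_realfun.measurable_EFinP.
  by move=> r; rewrite lee_fin.
by apply: eq_integral => x _; rewrite hev.
Qed.

Lemma phi_abs (R : realType) (G : R -> R) :
  (forall x, G (- x) = 1 - G x) -> (forall x y, x <= y -> G x <= G y) ->
  forall lam c, `|2 * G (lam * c) - 1| = Num.sg lam * (2 * (G (lam * `|c|) - 2^-1)).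
Proof.
move=> Gs Gm.
have G0 : G 0 = 2^-1 by have := Gs 0; rewrite oppr0; lra.
have e : forall z, 2 * (G z - 2^-1) = 2 * G z - 1.
  by move=> z; rewrite mulrBr mulfV.
have pos : forall z, 0 <= z -> 0 <= 2 * G z - 1.
  move=> z z0; rewrite -e mulr_ge0 // subr_ge0 -G0; exact: Gm.
have oddG : forall z, 2 * G (- z) - 1 = - (2 * G z - 1).
  by move=> z; rewrite Gs; lra.
have absz : forall z, `|2 * G z - 1| = Num.sg z * (2 * G z - 1).
  move=> z; have [z0|z0|z0] := ltrgtP z 0.
  - rewrite ltr0_sg // mulN1r.
    have := pos (- z); rewrite oppr_ge0 ltW // oddG => /(_ isT) h.
    by rewrite ler0_norm // -oppr_ge0.
  - by rewrite gtr0_sg // mul1r ger0_norm // pos // ltW.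
  - by rewrite z0 G0 mulfV // subrr normr0 sgr0 mul0r.
move=> lam c; rewrite e.
have -> : `|2 * G (lam * c) - 1| = `|2 * G (lam * `|c|) - 1|.
  have [c0|c0] := leP 0 c; first by rewrite (ger0_norm c0).
  by rewrite (ltr0_norm c0) mulrN oddG normrN.
rewrite absz sgrM; have [c0|c0] := eqVneq c 0.
  rewrite c0 normr0 mulr0 G0 mulfV // subrr !mulr0 //.
by rewrite sgr_norm c0 mulr1.
Qed.

Lemma dF_aux (R : realType) (G g : R -> R) (c fy x : R) : (forall x : R, is_derive x (1 : R) G (g x)) ->
  is_derive x 1 (fun l => (G (l * c) - 2^-1) * fy) (c * g (x * c) * fy).
Proof.
move=> hGder.
have h1 : is_derive x 1 (fun l : R => l * c) c.
  have := @is_deriveZ R R^o R^o id c x 1 1 (is_derive_id _ _).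
  rewrite scaler1.
  have -> : (fun l : R => l * c) = (c \*: id) by apply/funext => l; rewrite /= mulrC.
  by [].
have h2 := @is_derive1_comp R G (fun l => l * c) x (g (x * c)) c (hGder (x * c)) h1.
have h3 := is_deriveB h2 (is_derive_cst (2^-1 : R) x 1).
have h4 := is_deriveZ fy h3.
have -> : (fun l => (G (l * c) - 2^-1) * fy) = fy \*: ((G \o (fun l : R => l * c)) - cst 2^-1).
  by apply/funext => l /=; rewrite mulrC.
apply: is_derive_eq h4 _.
rewrite subr0 /GRing.scale /=; ring.
Qed.

Unset Implicit Arguments. Set Strict Implicit.

Theorem lemma1 (R : realType) (f G g w : R -> R)
  (hf : prob_density f) (hfsym : forall x, f (- x) = f x)
  (hg : prob_density g) (hgbd : exists M : R, forall x, g x <= M)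
  (hGint : forall x, ((G x)%:E = \int[@lebesgue_measure R]_(t in `]-oo, x]) (g t)%:E)%E)
  (hGder : forall x : R, is_derive x (1 : R) G (g x))
  (hGsym : forall x, G (- x) = 1 - G x)
  (hwmeas : measurable_fun setT w)
  (hwodd : forall x, w (- x) = - w x) (hwpos : forall x, 0 < x -> 0 < w x)
  (hwf : (\int[@lebesgue_measure R]_(x in `[0%R, +oo[) (w x * f x)%:E < +oo)%E) :
  forall lam : R,
    (@lebesgue_measure R).-integrable `[0%R, +oo[
        (fun x => (w x * f x * g (lam * w x))%:E) /\
    is_derive lam (1 : R) (M_TV f G w)
      (2 * RInt `[0%R, +oo[ (fun x => w x * f x * g (lam * w x))).
Proof.
move=> lam.
case: hf => mf [f0 f1]; case: hg => mg [g0 g1].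
case: hgbd => M hM.
have M0 : 0 <= M by exact: le_trans (g0 0) (hM 0).
have w0 : w 0 = 0 by have := hwodd 0; rewrite oppr0; lra.
have wge0 : forall x, 0 <= x -> 0 <= w x.
  move=> x; rewrite le_eqVlt => /orP[/eqP <-|/hwpos/ltW //]; by rewrite w0.
have Gc : continuous G.
  move=> x; apply: differentiable_continuous; apply/derivable1_diffP.
  by case: (hGder x).
have mG : measurable_fun setT G by exact: continuous_measurable_fun.
have Gm : forall x y, x <= y -> G x <= G y.
  move=> x y xy; apply: (@ger0_derive1_ndecr _ G x y) => //.
  - by move=> z _; rewrite derive1E (@derive_val _ _ _ _ _ _ _ (hGder z)).
  - exact: continuous_subspaceT.
have Gge0 : forall x, 0 <= G x.
  by move=> x; rewrite -lee_fin hGint; apply: integral_ge0 => t _; rewrite lee_fin.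
have Gle1 : forall x, G x <= 1.
  by move=> x; have := Gge0 (- x); rewrite hGsym; lra.
have mabsw : measurable_fun setT (fun x => `|w x|).
  by apply: measurableT_comp.
have mwf : measurable_fun setT (fun x => `|w x| * f x).
  by apply: measurable_funM.
have int_wf : (@lebesgue_measure R).-integrable setT (fun x => (`|w x| * f x)%:E).
  apply/integrableP; split; first exact/measurable_EFinP.
  under eq_integral do rewrite abse_EFin ger0_norm ?mulr_ge0 //.
  rewrite even_int //; last 2 first.
    by move=> x; rewrite mulr_ge0.
    by move=> x; rewrite hwodd normrN hfsym.
  under eq_integral => x.
    move=> /[!inE]; rewrite /= in_itv /= andbT => x0.
    rewrite (ger0_norm (wge0 _ x0)); over.
  by apply: lte_mul_pinfty.
have int_f : (@lebesgue_measure R).-integrable setT (fun x => (f x)%:E).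
  apply/integrableP; split; first exact/measurable_EFinP.
  under eq_integral do rewrite abse_EFin ger0_norm //.
  by rewrite f1 ltry.
have mgw : measurable_fun setT (fun x => g (lam * w x)).
  by apply: measurableT_comp => //; apply: measurable_funM.
have intM : (@lebesgue_measure R).-integrable `[0%R, +oo[
    (fun x => (M * (`|w x| * f x))%:E).
  apply: (@integrableS _ _ _ _ setT) => //.
  under eq_fun do rewrite EFinM.
  exact: integrableZl.
have int1 : (@lebesgue_measure R).-integrable `[0%R, +oo[
    (fun x => (w x * f x * g (lam * w x))%:E).
  apply: le_integrable intM => //.
  - apply/measurable_EFinP; apply: measurable_funTS.
    by apply: measurable_funM => //; apply: measurable_funM.
  - move=> x; rewrite /= in_itv /= andbT => x0.
    rewrite lee_fin (ger0_norm (wge0 _ x0)).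
    rewrite !ger0_norm ?mulr_ge0 ?wge0 //.
    rewrite [M * _]mulrC; apply: ler_wpM2l => //.
    exact: mulr_ge0 (wge0 _ x0) (f0 x).
split; first exact: int1.
pose F := fun l y => (G (l * `|w y|) - 2^-1) * f y.
have intF : forall l, (@lebesgue_measure R).-integrable setT (EFin \o F l).
  move=> l; apply: le_integrable int_f => //.
  - apply/measurable_EFinP; apply: measurable_funM => //.
    apply: measurable_funB => //; apply: measurableT_comp => //.
    exact: measurable_funM.
  - move=> x _; rewrite /= ?abse_EFin lee_fin normrM (ger0_norm (f0 x)).
    apply: ler_piMl => //.
    have := Gge0 (l * `|w x|); have := Gle1 (l * `|w x|).
    rewrite ler_norml => ? ?; apply/andP; split; lra.
have G0 : G 0 = 2^-1 by have := hGsym 0; rewrite oppr0; lra.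
have hMT : M_TV f G w = fun l => Rintegral (@lebesgue_measure R) setT (F l).
  apply/funext => l; rewrite /M_TV /RInt.
  have e : forall x, `|2 * G (l * w x) - 1| * f x = (Num.sg l * 2) * F l x.
    by move=> x; rewrite (phi_abs hGsym Gm) /F; ring.
  under eq_integral do rewrite e EFinM.
  rewrite integralZl //; last exact: intF l.
  rewrite fineM //; last exact: integrable_fin_num (intF l).
  rewrite /Rintegral.
  rewrite /=.
  have [l0|l0|l0] := ltrgtP l 0.
  - have -> : Num.sg l = -1 by exact: ltr0_sg.
    lra.
  - have -> : Num.sg l = 1 by exact: gtr0_sg.
    lra.
  - rewrite l0 sgr0 !mul0r integral0_eq // => x _.
    by rewrite /F mul0r G0 subrr mul0r.
rewrite hMT.
have dF : forall x y : R, is_derive x (1 : R) (F ^~ y) (`|w y| * g (x * `|w y|) * f y).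
  by move=> x y; exact: (dF_aux (`|w y|) (f y) x hGder).
have Ia : `]lam - 1, lam + 1[%classic lam.
  by rewrite /= in_itv /=; apply/andP; split; lra.
have intG' : (@lebesgue_measure R).-integrable setT
    (EFin \o (fun y => M * (`|w y| * f y))).
  rewrite /comp; under eq_fun do rewrite EFinM.
  exact: integrableZl.
have Gp : forall y, 0 <= M * (`|w y| * f y).
  by move=> y; rewrite mulr_ge0 // mulr_ge0.
have ub : forall x y : R, `]lam - 1, lam + 1[%classic x -> setT y ->
    `|partial1of2 F x y| <= M * (`|w y| * f y).
  move=> x y _ _; rewrite partial1of2E (@derive_val _ _ _ _ _ _ _ (dF x y)).
  rewrite !normrM normr_id (ger0_norm (g0 _)) (ger0_norm (f0 _)).
  rewrite mulrA; apply: ler_wpM2r => //; rewrite [X in X <= _]mulrC.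
  by apply: ler_wpM2r.
have der := @derivable_under_integral R _ _ (@lebesgue_measure R) F setT
  measurableT lam (lam - 1) (lam + 1) Ia (fun x _ => intF x)
  (fun x y _ _ => @ex_derive _ _ _ _ _ _ _ (dF x y)) _ Gp intG' ub.
have dval := @differentiation_under_integral R _ _ (@lebesgue_measure R) F setT
  measurableT lam (lam - 1) (lam + 1) Ia (fun x _ => intF x)
  (fun x y _ _ => @ex_derive _ _ _ _ _ _ _ (dF x y)) _ Gp intG' ub.
apply: DeriveDef; first exact: der.
rewrite -derive1E dval.
rewrite /Rintegral /RInt.
under eq_integral => y _ do
  rewrite partial1of2E (@derive_val _ _ _ _ _ _ _ (dF lam y)).
rewrite even_int //; last 3 first.
- apply: measurable_funM => //; apply: measurable_funM => //.
  apply: measurableT_comp => //; exact: measurable_funM.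
- by move=> y; rewrite mulr_ge0 // mulr_ge0.
- by move=> y; rewrite hwodd normrN hfsym.
under eq_integral => y.
  move=> /[!inE]; rewrite /= in_itv /= andbT => y0.
  rewrite (ger0_norm (wge0 _ y0)) mulrAC; over.
rewrite fineM //; exact: integrable_fin_num int1.
Qed.
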